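(* Let $k$ be an algebraically closed field of characteristic zero, let $\mathbb{T}^2=\operatorname{Spec}k[x^{\pm1},y^{\pm1}]$ and $\omega=\frac{dx}{x}\wedge\frac{dy}{y}$. Then: (1) the Lie subalgebra of $\mathrm{Vec}(\mathbb{T}^2)$ generated by all locally nilpotent vector fields is zero, and so is the one generated by the Hamiltonian locally nilpotent vector fields; (2) $\mathcal{H}_\omega(\mathbb{T}^2)$ is a proper Lie ideal of codimension $2$ of $\mathrm{VP}_\omega(\mathbb{T}^2)$; (3) $\mathcal{E}_\omega(\mathbb{T}^2)=[\mathcal{H}_\omega(\mathbb{T}^2),\mathcal{H}_\omega(\mathbb{T}^2)]=\mathcal{H}_\omega(\mathbb{T}^2)$, and this is a simple Lie algebra of bracket width one.
   Context: For a smooth affine surface $S$ with nowhere vanishing $2$-form $\omega$: $\mathrm{Div}_\omega\xi\in\mathcal{O}(S)$ is defined by $d(i_\xi\omega)=(\mathrm{Div}_\omega\xi)\omega$; $\mathrm{VP}_\omega(S)=\{\xi\in\mathrm{Vec}(S):\mathrm{Div}_\omega\xi=0\}$ (symplectic vector fields, i.e. $i_\xi\omega$ closed). For $f\in\mathcal{O}(S)$, $\theta_f$ is the unique vector field with $i_{\theta_f}\omega=df$; $\mathcal{H}_\omega(S)=\{\theta_f: f\in\mathcal{O}(S)\}$ (Hamiltonian vector fields, i.e. those $\xi$ with $i_\xi\omega$ exact). $E_\omega(S)=\mathrm{Div}_\omega(\mathrm{Vec}(S))\subseteq\mathcal{O}(S)$ and $\mathcal{E}_\omega(S)=\{\theta_f: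 f\in E_\omega(S)\}$. A vector field is locally nilpotent if the corresponding derivation $\partial$ of $\mathcal{O}(S)$ satisfies: for every $f$ some power $\partial^s f=0$. The bracket width of a Lie algebra $L$ is the supremum over $a\in[L,L]$ of the smallest number of brackets of elements of $L$ summing to $a$. *)

(* Defs.v *)
From HB Require Import structures.
From mathcomp Require Import all_boot all_order all_algebra.
From mathcomp Require Import finmap.
From mathcomp.multinomials Require Import xfinmap monalg.

Set Implicit Arguments.
Unset Strict Implicit.
Unset Printing Implicit Defensive.

Import Order.TTheory GRing.Theory Num.Theory.
Local Open Scope fset.
Local Open Scope ring_scope.

(* The coordinate ring O(T^2) = k[x^{+-1}, y^{+-1}]: the group algebra *)
(* of Z^2, i.e. finitely supported functions Z^2 -> k with convolution. *)
(* Monomial x^i y^j is << (i, j) >>.                                   *)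
Definition Z2 := (int * int)%type.

Definition LP (R : nzRingType) := malg Z2 R.

Section LPRing.
Context (R : nzRingType).
Implicit Types (g : LP R) (k : Z2).

Local Notation "g1 *M_[ k1 , k2 ] g2" :=
  << g1@_k1 * g2@_k2 *g (k1 + k2)%R >>
  (at level 40, no associativity).

Definition lpone : LP R := << (0 : Z2) >>.

Definition lpmul g1 g2 : LP R :=
  \sum_(k1 <- msupp g1) \sum_(k2 <- msupp g2) g1 *M_[k1, k2] g2.

Lemma lpmulw (d1 d2 : {fset Z2}) g1 g2 :
  msupp g1 `<=` d1 -> msupp g2 `<=` d2 ->
  lpmul g1 g2 = \sum_(k1 <- d1) \sum_(k2 <- d2) g1 *M_[k1, k2] g2.
Proof.
move=> le_d1 le_d2; rewrite /lpmul (big_fset_incl _ le_d1) /=.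
  apply/eq_bigr=> k1 _; apply/big_fset_incl => // k _ /mcoeff_outdom ->.
  by rewrite mulr0 monalgU0.
move=> k _ /mcoeff_outdom g1k.
by rewrite big1 => // k' _; rewrite g1k mul0r monalgU0.
Qed.

Lemma lpmul0g : left_zero 0 lpmul.
Proof. by move=> g; rewrite /lpmul msupp0 big_seq_fset0. Qed.

Lemma lpmulg0 : right_zero 0 lpmul.
Proof.
by move=> g; rewrite /lpmul exchange_big msupp0 big_seq_fset0.
Qed.

Lemma lpmulUg c k g :
  lpmul << c *g k >> g = \sum_(k' <- msupp g) << c * g@_k' *g (k + k')%R >>.
Proof.
rewrite (lpmulw msuppU_le (fsubset_refl _)) big_seq_fset1.
by apply/eq_bigr => k' _; rewrite mcoeffUU.
Qed.

Lemma lpmulgU c k g :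
  lpmul g << c *g k >> = \sum_(k' <- msupp g) << g@_k' * c *g (k' + k)%R >>.
Proof.
rewrite (lpmulw (fsubset_refl _) msuppU_le).
by apply/eq_bigr=> k' _; rewrite big_seq_fset1 mcoeffUU.
Qed.

Lemma lpmulUU c1 c2 k1 k2 :
  lpmul << c1 *g k1 >> << c2 *g k2 >> = << c1 * c2 *g (k1 + k2)%R >>.
Proof. by rewrite (lpmulw msuppU_le msuppU_le) !big_seq_fset1 !mcoeffUU. Qed.

Lemma lpmulEl1 g1 g2 :
  lpmul g1 g2 = \sum_(k1 <- msupp g1) lpmul << g1@_k1 *g k1 >> g2.
Proof. by apply/eq_bigr=> k _; rewrite lpmulUg. Qed.

Lemma lpmulEr1 g1 g2 :
  lpmul g1 g2 = \sum_(k2 <- msupp g2) lpmul g1 << g2@_k2 *g k2 >>.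
Proof.
rewrite {1}/lpmul exchange_big /=; apply/eq_bigr=> k _; rewrite lpmulgU.
by apply/eq_bigr=> k' _.
Qed.

Lemma lpmul1g : left_id lpone lpmul.
Proof.
move=> g; rewrite lpmulUg [RHS]monalgE.
by apply/eq_bigr=> kg _; rewrite mul1r add0r.
Qed.

Lemma lpmulg1 : right_id lpone lpmul.
Proof.
move=> g; rewrite lpmulgU [RHS]monalgE.
by apply/eq_bigr=> k _; rewrite mulr1 addr0.
Qed.

Lemma lpmulgDl : left_distributive lpmul +%R.
Proof.
move=> g1 g2 g.
rewrite [in RHS](lpmulw (fsubsetUl _ (msupp g2)) (fsubset_refl _)).
rewrite [in RHS](lpmulw (fsubsetUr (msupp g1) _) (fsubset_refl _)).
rewrite (lpmulw (msuppD_le _ _) (fsubset_refl _)).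
rewrite -big_split /=; apply/eq_bigr=> k1 _.
rewrite -big_split /=; apply/eq_bigr=> k2 _.
by rewrite mcoeffD mulrDl monalgUD.
Qed.

Lemma lpmulgDr : right_distributive lpmul +%R.
Proof.
move=> g g1 g2.
rewrite [in RHS](lpmulw (fsubset_refl _) (fsubsetUl _ (msupp g2))).
rewrite [in RHS](lpmulw (fsubset_refl _) (fsubsetUr (msupp g1) _)).
rewrite (lpmulw (fsubset_refl _) (msuppD_le _ _)).
rewrite -big_split /=; apply/eq_bigr=> k1 _.
rewrite -big_split /=; apply/eq_bigr=> k2 _.
by rewrite mcoeffD mulrDr monalgUD.
Qed.

Lemma lpmulA : associative lpmul.
Proof.
move=> g1 g2 g3.
rewrite [RHS](big_morph (lpmul^~ _) (fun _ _ => lpmulgDl _ _ _) (lpmul0g _)).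
rewrite lpmulEl1; apply/eq_bigr=> k1 _.
rewrite [LHS](big_morph (lpmul _) (fun _ _ => lpmulgDr _ _ _) (lpmulg0 _)).
rewrite [RHS](big_morph (lpmul^~ _) (fun _ _ => lpmulgDl _ _ _) (lpmul0g _)).
apply/eq_bigr=> k2 _.
rewrite [LHS](big_morph (lpmul _) (fun _ _ => lpmulgDr _ _ _) (lpmulg0 _)).
by rewrite lpmulEr1; apply/eq_bigr=> k3 _; rewrite !lpmulUU mulrA addrA.
Qed.

Lemma lpone_neq0 : lpone != 0.
Proof. by apply/eqP/malgP=> /(_ 0) /eqP; rewrite !mcoeffsE oner_eq0. Qed.

HB.instance Definition _ := GRing.Lmodule.on (LP R).
HB.instance Definition _ := GRing.Zmodule_isRing.Build (LP R)
  lpmulA lpmul1g lpmulg1 lpmulgDl lpmulgDr lpone_neq0.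

Lemma lpscaleE c g : c *: g = lpmul << c *g 0 >> g.
Proof.
rewrite lpmulUg malgZ_def; apply/eq_bigr=> k _.
by rewrite add0r.
Qed.

Lemma lpscaleAl c (g1 g2 : LP R) : c *: (g1 * g2) = (c *: g1) * g2.
Proof. by rewrite !lpscaleE; apply: lpmulA. Qed.

HB.instance Definition _ := GRing.Lmodule_isLalgebra.Build R (LP R)
  lpscaleAl.

End LPRing.

Section LPComRing.
Context (R : comNzRingType).

Lemma lpmulC : @commutative (LP R) _ *%R.
Proof.
move=> g1 g2; rewrite /GRing.mul /= /lpmul exchange_big /=.
apply/eq_bigr=> k1 _; apply/eq_bigr=> k2 _.
by rewrite mulrC addrC.
Qed.

HB.instance Definition _ := GRing.Ring_hasCommutativeMul.Build (LP R) lpmulC.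
HB.instance Definition _ := GRing.Lalgebra_isComAlgebra.Build R (LP R).

End LPComRing.

Section LieVocabulary.
Context (K : nzRingType) (V : lmodType K) (brk : V -> V -> V).

Definition subspace (P : V -> Prop) : Prop :=
  P 0 /\ (forall (a : K) x y, P x -> P y -> P (a *: x + y)).

Definition lie_subalgebra (P : V -> Prop) : Prop :=
  subspace P /\ (forall x y, P x -> P y -> P (brk x y)).

Definition lie_generated (S : V -> Prop) (v : V) : Prop :=
  forall P, lie_subalgebra P -> (forall s, S s -> P s) -> P v.

Definition lin_span (S : V -> Prop) (v : V) : Prop :=
  exists n (c : 'I_n -> K) (w : 'I_n -> V),
    (forall i, S (w i)) /\ v = \sum_(i < n) c i *: w i.

Definition lie_commutator (A B : V -> Prop) : V -> Prop :=
  lin_span (fun w => exists a b, A a /\ B b /\ w = brk a b).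

Definition lie_ideal (I A : V -> Prop) : Prop :=
  subspace I /\ (forall x, I x -> A x) /\
  (forall a x, A a -> I x -> I (brk a x)).

Definition proper_in (I A : V -> Prop) : Prop :=
  (forall x, I x -> A x) /\ exists x, A x /\ ~ I x.

(* codimension of the subspace I in the subspace A is n, i.e.
   dim (A / I) = n: the classes of some w_0,..,w_{n-1} in A form a
   basis of A / I *)
Definition codim_in (n : nat) (I A : V -> Prop) : Prop :=
  exists w : 'I_n -> V,
    (forall i, A (w i)) /\
    (forall x, A x -> exists c : 'I_n -> K, I (x - \sum_(i < n) c i *: w i)) /\
    (forall c : 'I_n -> K, I (\sum_(i < n) c i *: w i) -> forall i, c i = 0).

Definition simple_lie (A : V -> Prop) : Prop :=
  lie_subalgebra A /\
  (exists a b, A a /\ A b /\ brk a b <> 0) /\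
  (forall I, lie_ideal I A -> (forall x, I x -> x = 0) \/ (forall x, A x -> I x)).

Definition bracket_width_le (A : V -> Prop) (n : nat) : Prop :=
  forall a, lie_commutator A A a ->
    exists m, (m <= n)%N /\ exists b c : 'I_m -> V,
      (forall i, A (b i) /\ A (c i)) /\ a = \sum_(i < m) brk (b i) (c i).

Definition bracket_width_eq (A : V -> Prop) (n : nat) : Prop :=
  bracket_width_le A n /\ forall m, (m < n)%N -> ~ bracket_width_le A m.

End LieVocabulary.

Section Torus.
Context (k : fieldType).

Definition Ot := LP k.

Definition mono (i j : int) : Ot := << ((i, j) : Z2) >>.
Definition xx : Ot := mono 1 0.
Definition yy : Ot := mono 0 1.
Definition xinv : Ot := mono (-1) 0.
Definition yinv : Ot := mono 0 (-1).

(* Euler derivations x d/dx and y d/dy: x^i y^j |-> i x^i y^j, j x^i y^j *)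
Definition dX (f : Ot) : Ot :=
  \sum_(m <- msupp f) << (m.1)%:~R * f@_m *g m >>.
Definition dY (f : Ot) : Ot :=
  \sum_(m <- msupp f) << (m.2)%:~R * f@_m *g m >>.

(* Vec(T^2) = Der_k(O(T^2)) is the free O-module with basis x d/dx,
   y d/dy; xi = (a, b) stands for a x d/dx + b y d/dy *)
Definition Vect := (Ot * Ot)%type.

Definition vact (xi : Vect) (f : Ot) : Ot := xi.1 * dX f + xi.2 * dY f.

Definition vf_of_der (D : Ot -> Ot) : Vect := (xinv * D xx, yinv * D yy).

Definition vbracket (xi eta : Vect) : Vect :=
  vf_of_der (fun f => vact xi (vact eta f) - vact eta (vact xi f)).

Definition locally_nilpotent (xi : Vect) : Prop :=
  forall f : Ot, exists s : nat, iter s (vact xi) f = 0.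

(* differential forms: a 1-form (a, b) is a dx/x + b dy/y; a 2-form c is
   c (dx/x /\ dy/y) *)
Definition Form1 := (Ot * Ot)%type.
Definition Form2 := Ot.
Definition dx_x : Form1 := (1, 0).
Definition dy_y : Form1 := (0, 1).
Definition wedge (al be : Form1) : Form2 := al.1 * be.2 - al.2 * be.1.
Definition omega : Form2 := wedge dx_x dy_y.

Definition d0 (f : Ot) : Form1 := (dX f, dY f).
Definition d1 (al : Form1) : Form2 := dX al.2 - dY al.1.

(* evaluation of a 1-form on a vector field: (dx/x)(xi) = xi(x)/x *)
Definition eval1 (al : Form1) (xi : Vect) : Ot :=
  al.1 * (xinv * vact xi xx) + al.2 * (yinv * vact xi yy).

(* interior product of a 2-form c omega:
   i_xi (al /\ be) = al(xi) be - be(xi) al *)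
Definition contr (xi : Vect) (c : Form2) : Form1 :=
  (c * (- eval1 dy_y xi), c * eval1 dx_x xi).

(* Div_omega xi = f  iff  d (i_xi omega) = f omega *)
Definition is_div (xi : Vect) (f : Ot) : Prop := d1 (contr xi omega) = f * omega.

Definition VP (xi : Vect) : Prop := d1 (contr xi omega) = 0.

Definition Ham (xi : Vect) : Prop := exists f : Ot, contr xi omega = d0 f.

Definition Eom (f : Ot) : Prop := exists xi : Vect, is_div xi f.

Definition calE (xi : Vect) : Prop :=
  exists f : Ot, Eom f /\ contr xi omega = d0 f.

End Torus.

(* Main.v *)
Require Import Defs.
From HB Require Import structures.
From mathcomp Require Import all_boot all_order all_algebra.
From mathcomp Require Import finmap.
From mathcomp.multinomials Require Import xfinmap monalg.
From mathcomp Require Import zify ring lra.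
From Stdlib Require Import Classical.
Set Implicit Arguments.
Unset Strict Implicit.
Unset Printing Implicit Defensive.
Import Order.TTheory GRing.Theory Num.Theory.
Local Open Scope fset.
Local Open Scope ring_scope.


Lemma crbound (N m1 m2 : int) : m1 != 0 -> 1 + m2 * m2 <= N -> N * m1 - m2 != 0.
Proof.
move=> h1 h2; apply/eqP => e.
have h3 : m2 * m2 + 1 > m2 by nia.
have h4 : m2 * m2 + 1 > - m2 by nia.
have [h|h] : 1 <= m1 \/ m1 <= -1 by lia.
  have : N * m1 >= N by nia.
  lia.
have : N * m1 <= - N by nia.
lia.
Qed.

Section Generic.
Variable R : comNzRingType.
Variables D1 D2 : R -> R.
Hypotheses (D1D : forall a b, D1 (a + b) = D1 a + D1 b)
           (D2D : forall a b, D2 (a + b) = D2 a + D2 b)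
           (D1N : forall a, D1 (- a) = - D1 a)
           (D2N : forall a, D2 (- a) = - D2 a)
           (D1M : forall a b, D1 (a * b) = D1 a * b + a * D1 b)
           (D2M : forall a b, D2 (a * b) = D2 a * b + a * D2 b)
           (D12 : forall a, D1 (D2 a) = D2 (D1 a)).

Definition gact (xi : R * R) f := xi.1 * D1 f + xi.2 * D2 f.
Definition gbr (xi eta : R * R) :=
  (gact xi eta.1 - gact eta xi.1, gact xi eta.2 - gact eta xi.2).
Definition gth (f : R) := (D2 f, - D1 f).

Lemma D1B a b : D1 (a - b) = D1 a - D1 b. Proof. by rewrite D1D D1N. Qed.
Lemma D2B a b : D2 (a - b) = D2 a - D2 b. Proof. by rewrite D2D D2N. Qed.

Lemma gth_br f g : gbr (gth f) (gth g) = gth (D2 f * D1 g - D1 f * D2 g).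
Proof.
rewrite /gbr /gth /gact /=; congr pair.
  rewrite D2B !D2M ?D2N ?D1N (D12 g) (D12 f); ring.
rewrite D1B !D1M ?D2N ?D1N (D12 g) (D12 f); ring.
Qed.

Lemma gVP_br xi f : D1 xi.1 + D2 xi.2 = 0 -> gbr xi (gth f) = gth (gact xi f).
Proof.
case: xi => a b /= h; rewrite /gbr /gth /gact /=.
have e : D1 a = - D2 b by apply/eqP; rewrite -subr_eq0 opprK h.
congr pair.
  rewrite D2D !D2M ?D1N ?D2N (D12 f) e; ring.
rewrite D1N D1D !D1M ?D1N ?D2N (D12 f) e; ring.
Qed.

Lemma gth_VP f : D1 (gth f).1 + D2 (gth f).2 = 0.
Proof. by rewrite /= D2N D12 subrr. Qed.

End Generic.

Section Basics.
Variable k : fieldType.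
Hypothesis char0 : [pchar k] =i pred0.
Local Notation O := (Ot k).
Implicit Types f g : O.

Lemma intrf_eq0 (z : int) : (z%:~R == 0 :> k) = (z == 0).
Proof.
case: z => n /=.
  by rewrite ((pcharf0P _).1 char0).
by rewrite NegzE mulrNz oppr_eq0 ((pcharf0P _).1 char0).
Qed.

Lemma intrf_inj (a b : int) : (a%:~R = b%:~R :> k) -> a = b.
Proof.
move=> /eqP; rewrite -subr_eq0 -intrB intrf_eq0 subr_eq0 => /eqP //.
Qed.

Lemma sum_pred1_seq (T : eqType) (s : seq T) (F : T -> k) n : uniq s ->
  \sum_(m <- s | m == n) F m = if n \in s then F n else 0.
Proof.
elim: s => [|a s IH] /=; first by rewrite big_nil.
move=> /andP [ans us]; rewrite big_cons IH // in_cons.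
case: (eqVneq a n) => [<-|ne] /=.
  by rewrite (negPf ans) addr0.
by [].
Qed.

Lemma mcoeff_sumU (s : seq Z2) (F : Z2 -> k) n : uniq s ->
  (\sum_(m <- s) << F m *g m >> : O)@_n = if n \in s then F n else 0.
Proof.
move=> us; rewrite raddf_sum /=.
under eq_bigr do rewrite mcoeffU.
rewrite (eq_bigr (fun m => if m == n then F m else 0)); last first.
  by move=> m _; case: eqP.
by rewrite -big_mkcond /= sum_pred1_seq.
Qed.

Lemma mcoeff_sumU0 (s : {fset Z2}) (F : Z2 -> k) n :
  (forall m, m \notin s -> F m = 0) ->
  (\sum_(m <- s) << F m *g m >> : O)@_n = F n.
Proof.
move=> H; rewrite mcoeff_sumU ?fset_uniq //.
by case: ifP => // /negbT /H ->.
Qed.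

Definition Dw_def (w : Z2 -> int) (f : O) : O :=
  \sum_(m <- msupp f) << (w m)%:~R * f@_m *g m >>.
Fact Dw_key : unit. Proof. exact: tt. Qed.
Definition Dw := locked_with Dw_key Dw_def.

Lemma dXE f : dX f = Dw (fun m => m.1) f.
Proof. by rewrite /Dw unlock. Qed.
Lemma dYE f : dY f = Dw (fun m => m.2) f.
Proof. by rewrite /Dw unlock. Qed.

Lemma Dw_coef w f n : (Dw w f)@_n = (w n)%:~R * f@_n.
Proof.
rewrite /Dw unlock /Dw_def mcoeff_sumU0 // => m /mcoeff_outdom ->; by rewrite mulr0.
Qed.


Lemma mul_coefw (s : {fset Z2}) (f g : O) n : msupp f `<=` s ->
  (f * g)@_n = \sum_(m <- s) f@_m * g@_(n - m).
Proof.
move=> sub.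
rewrite [f * g]/GRing.mul /= (lpmulw sub (fsubset_refl (msupp g))).
rewrite raddf_sum /=; apply: eq_bigr => m _.
rewrite raddf_sum /=.
under eq_bigr do rewrite mcoeffU.
rewrite (eq_bigr (fun m' => if m' == n - m then f@_m * g@_m' else 0)); last first.
  move=> m' _; have -> : (m + m' == n) = (m' == n - m).
    apply/eqP/eqP => [<-|->].
      by rewrite (addrC m m') -addrA subrr addr0.
    by rewrite addrC -addrA (addrC (-m)) subrr addr0.
  by case: eqP.
rewrite -big_mkcond /= sum_pred1_seq ?fset_uniq //.
by case: ifP => // /negbT /mcoeff_outdom ->; rewrite mulr0.
Qed.

Lemma mul_coef (f g : O) n :
  (f * g)@_n = \sum_(m <- msupp f) f@_m * g@_(n - m).
Proof. exact: mul_coefw. Qed.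

Lemma mulU_coef (c : k) (p : Z2) (g : O) n : ((<< c *g p >> : O) * g)@_n = c * g@_(n - p).
Proof.
rewrite (mul_coefw g n msuppU_le) big_seq_fset1 mcoeffUU //.
Qed.


Section DwLemmas.
Variable w : Z2 -> int.
Hypothesis wB : forall a b, w (a - b) = w a - w b.

Lemma w0 : w 0 = 0.
Proof. by have := wB 0 0; rewrite !subrr. Qed.

Lemma DwD f g : Dw w (f + g) = Dw w f + Dw w g.
Proof. by apply/malgP => n; rewrite mcoeffD !Dw_coef mcoeffD mulrDr. Qed.
Lemma DwZ (c : k) f : Dw w (c *: f) = c *: Dw w f.
Proof. by apply/malgP => n; rewrite mcoeffZ !Dw_coef mcoeffZ mulrCA. Qed.
Lemma DwN f : Dw w (- f) = - Dw w f.
Proof. by apply/malgP => n; rewrite mcoeffN !Dw_coef mcoeffN mulrN. Qed.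
Lemma DwB f g : Dw w (f - g) = Dw w f - Dw w g.
Proof. by rewrite DwD DwN. Qed.
Lemma Dw0 : Dw w 0 = 0.
Proof. by apply/malgP => n; rewrite Dw_coef mcoeff0 mulr0. Qed.
Lemma DwU (c : k) p : Dw w (<< c *g p >> : O) = << (w p)%:~R * c *g p >>.
Proof.
apply/malgP => n; rewrite Dw_coef [in X in X = _]mcoeffU [in X in _ = X]mcoeffU.
by case: eqP => [->|_]; rewrite ?mulr0.
Qed.
Lemma Dw1 : Dw w (1 : O) = 0.
Proof.
have -> : (1 : O) = << (1 : k) *g (0 : Z2) >> by [].
by rewrite DwU w0 mul0r monalgU0.
Qed.

Lemma Dw_supp f : msupp (Dw w f) `<=` msupp f.
Proof.
apply/fsubsetP => m; rewrite -!mcoeff_neq0 Dw_coef.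
by apply: contraNN => /eqP ->; rewrite mulr0.
Qed.

Lemma DwM f g : Dw w (f * g) = Dw w f * g + f * Dw w g.
Proof.
apply/malgP => n; rewrite mcoeffD Dw_coef [in X in X = _](mul_coef f g n).
rewrite [in X in _ = X + _](mul_coefw g n (Dw_supp f)).
rewrite [in X in _ = _ + X]mul_coef mulr_sumr -big_split /=; apply: eq_bigr => m _.
rewrite !Dw_coef wB intrB; ring.
Qed.

End DwLemmas.

Lemma Dw_comm w1 w2 f : Dw w1 (Dw w2 f) = Dw w2 (Dw w1 f).
Proof. by apply/malgP => n; rewrite !Dw_coef mulrCA. Qed.

Lemma fstB (a b : Z2) : (a - b).1 = a.1 - b.1. Proof. by []. Qed.
Lemma sndB (a b : Z2) : (a - b).2 = a.2 - b.2. Proof. by []. Qed.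


Local Notation DX := (Dw (fun m : Z2 => m.1)).
Local Notation DY := (Dw (fun m : Z2 => m.2)).

Lemma DXM f g : DX (f * g) = DX f * g + f * DX g.
Proof. exact: DwM. Qed.
Lemma DYM f g : DY (f * g) = DY f * g + f * DY g.
Proof. exact: DwM. Qed.
Lemma DXD f g : DX (f + g) = DX f + DX g. Proof. exact: DwD. Qed.
Lemma DYD f g : DY (f + g) = DY f + DY g. Proof. exact: DwD. Qed.
Lemma DXN f : DX (- f) = - DX f. Proof. exact: DwN. Qed.
Lemma DYN f : DY (- f) = - DY f. Proof. exact: DwN. Qed.
Lemma DXB f g : DX (f - g) = DX f - DX g. Proof. exact: DwB. Qed.
Lemma DYB f g : DY (f - g) = DY f - DY g. Proof. exact: DwB. Qed.
Lemma DXZ (c : k) f : DX (c *: f) = c *: DX f. Proof. exact: DwZ. Qed.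
Lemma DYZ (c : k) f : DY (c *: f) = c *: DY f. Proof. exact: DwZ. Qed.
Lemma DX0 : DX 0 = 0. Proof. exact: Dw0. Qed.
Lemma DY0 : DY 0 = 0. Proof. exact: Dw0. Qed.
Lemma DX1 : DX 1 = 0. Proof. exact: Dw1. Qed.
Lemma DY1 : DY 1 = 0. Proof. exact: Dw1. Qed.
Lemma DXY f : DX (DY f) = DY (DX f). Proof. exact: Dw_comm. Qed.
Lemma DX_coef f n : (DX f)@_n = (n.1)%:~R * f@_n. Proof. exact: Dw_coef. Qed.
Lemma DY_coef f n : (DY f)@_n = (n.2)%:~R * f@_n. Proof. exact: Dw_coef. Qed.

Lemma DXxx : DX (xx k) = xx k.
Proof. by rewrite /xx /mono DwU mulr1. Qed.
Lemma DYxx : DY (xx k) = 0.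
Proof. by rewrite /xx /mono DwU mulr1 monalgU0. Qed.
Lemma DXyy : DX (yy k) = 0.
Proof. by rewrite /yy /mono DwU mulr1 monalgU0. Qed.
Lemma DYyy : DY (yy k) = yy k.
Proof. by rewrite /yy /mono DwU mulr1. Qed.

Lemma xinvK : xinv k * xx k = 1.
Proof. by rewrite /xinv /xx /mono [_ * _]lpmulUU mulr1. Qed.
Lemma yinvK : yinv k * yy k = 1.
Proof. by rewrite /yinv /yy /mono [_ * _]lpmulUU mulr1. Qed.

Implicit Types xi eta : Vect k.

Lemma vactE xi f : vact xi f = xi.1 * DX f + xi.2 * DY f.
Proof. by rewrite /vact dXE dYE. Qed.

Section Gen.
Variables X Y Xi Yi : O.
Hypotheses (hXX : DX X = X) (hYX : DY X = 0) (hXY : DX Y = 0) (hYY : DY Y = Y)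
  (hXi : Xi * X = 1) (hYi : Yi * Y = 1).

Lemma gvact_X xi : vact xi X = xi.1 * X.
Proof. by rewrite vactE hXX hYX mulr0 addr0. Qed.
Lemma gvact_Y xi : vact xi Y = xi.2 * Y.
Proof. by rewrite vactE hXY hYY mulr0 add0r. Qed.
Lemma gvact_mulX xi g : vact xi (g * X) = (vact xi g + g * xi.1) * X.
Proof.
rewrite !vactE DXM DYM hXX hYX.
move: (DX g) (DY g) (xi.1) (xi.2) => A B C D; ring.
Qed.
Lemma gvact_mulY xi g : vact xi (g * Y) = (vact xi g + g * xi.2) * Y.
Proof.
rewrite !vactE DXM DYM hXY hYY.
move: (DX g) (DY g) (xi.1) (xi.2) => A B C D; ring.
Qed.

Lemma gbracket xi eta :
  (Xi * (vact xi (vact eta X) - vact eta (vact xi X)),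
   Yi * (vact xi (vact eta Y) - vact eta (vact xi Y))) =
  (vact xi eta.1 - vact eta xi.1, vact xi eta.2 - vact eta xi.2).
Proof.
congr pair.
  rewrite (gvact_X eta) (gvact_X xi) gvact_mulX gvact_mulX -mulrBl mulrCA hXi mulr1.
  move: (vact xi eta.1) => A; move: (vact eta xi.1) => B.
  move: (xi.1) => C; move: (eta.1) => D; ring.
rewrite (gvact_Y eta) (gvact_Y xi) gvact_mulY gvact_mulY -mulrBl mulrCA hYi mulr1.
move: (vact xi eta.2) => A; move: (vact eta xi.2) => B.
move: (xi.2) => C; move: (eta.2) => D; ring.
Qed.

Lemma gcontr xi :
  ((1 * 1 - 0 * 0) * - (0 * (Xi * vact xi X) + 1 * (Yi * vact xi Y)),
   (1 * 1 - 0 * 0) * (1 * (Xi * vact xi X) + 0 * (Yi * vact xi Y))) =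
  (- xi.2, xi.1) :> O * O.
Proof.
rewrite gvact_X gvact_Y (mulrCA Xi) (mulrCA Yi) hXi hYi !mulr1.
move: (xi.1) (xi.2) => A B; congr pair; ring.
Qed.
End Gen.

Lemma vbracketE xi eta : vbracket xi eta =
  (vact xi eta.1 - vact eta xi.1, vact xi eta.2 - vact eta xi.2).
Proof.
rewrite /vbracket /vf_of_der /=.
exact: (gbracket DXxx DYxx DXyy DYyy xinvK yinvK).
Qed.

Definition theta f : Vect k := (DY f, - DX f).

Lemma contrE xi : contr xi (omega k) = (- xi.2, xi.1).
Proof.
rewrite /contr /omega /wedge /eval1 /dx_x /dy_y /=.
exact: (gcontr DXxx DYxx DXyy DYyy xinvK yinvK).
Qed.

Lemma HamE xi : Ham xi <-> exists f, xi = theta f.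
Proof.
rewrite /Ham; split => -[f hf]; exists f.
  move: hf; rewrite contrE /d0 /theta dXE dYE => -[h1 h2].
  by case: xi h1 h2 => a b /= h1 h2; rewrite h2 -h1 opprK.
by rewrite hf contrE /theta /d0 /= opprK dXE dYE.
Qed.

Lemma VPE xi : VP xi <-> DX xi.1 + DY xi.2 = 0.
Proof. by rewrite /VP contrE /d1 /= dXE dYE DYN opprK. Qed.


Lemma vact_g xi f : vact xi f = gact DX DY xi f.
Proof. exact: vactE. Qed.

Lemma vbracket_g xi eta : vbracket xi eta = gbr DX DY xi eta.
Proof.
rewrite vbracketE /gbr.
rewrite (vact_g xi eta.1) (vact_g eta xi.1) (vact_g xi eta.2) (vact_g eta xi.2).
by [].
Qed.

Lemma theta_bracket f g :
  vbracket (theta f) (theta g) = theta (DY f * DX g - DX f * DY g).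
Proof.
rewrite vbracket_g; apply: gth_br.
- exact: DXD. - exact: DYD. - exact: DXN. - exact: DYN.
- exact: DXM. - exact: DYM. - exact: DXY.
Qed.

Lemma VP_bracket xi f : VP xi -> vbracket xi (theta f) = theta (vact xi f).
Proof.
move/VPE => h; rewrite vbracket_g vact_g; apply: gVP_br => //.
- exact: DXD. - exact: DYD. - exact: DXN. - exact: DYN.
- exact: DXM. - exact: DYM. - exact: DXY.
Qed.

Lemma theta_VP f : VP (theta f).
Proof. apply/VPE; apply: gth_VP; [exact: DYN | exact: DXY]. Qed.


Definition e (p : Z2) : O := << (1 : k) *g p >>.
Definition br f g : O := DY f * DX g - DX f * DY g.
Definition cr (p n : Z2) : int := p.2 * n.1 - p.1 * n.2.

Lemma e_coef p n : (e p)@_n = if p == n then 1 else 0.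
Proof. by rewrite /e mcoeffU; case: eqP. Qed.

Lemma one_e : (1 : O) = e 0. Proof. by []. Qed.

Lemma DXe p : DX (e p) = << (p.1)%:~R *g p >>.
Proof. by rewrite /e DwU mulr1. Qed.
Lemma DYe p : DY (e p) = << (p.2)%:~R *g p >>.
Proof. by rewrite /e DwU mulr1. Qed.

Lemma crcast (a b c d : int) : ((a * c - b * d)%:~R : k) = a%:~R * c%:~R - b%:~R * d%:~R.
Proof. by rewrite intrB !intrM. Qed.
Lemma br_e_coef p g n : (br (e p) g)@_n = (cr p (n - p))%:~R * g@_(n - p).
Proof.
rewrite /br mcoeffB DYe DXe [in X in X - _]mulU_coef [in X in _ - X]mulU_coef.
rewrite DX_coef DY_coef /cr crcast.
move: (g@_(n - p)) => G; ring.
Qed.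

Lemma thetaD f g : theta (f + g) = theta f + theta g.
Proof. by rewrite /theta DXD DYD opprD. Qed.
Lemma thetaZ (c : k) f : theta (c *: f) = c *: theta f.
Proof. by rewrite /theta DXZ DYZ -scalerN. Qed.
Lemma theta_lin (c : k) f g : theta (c *: f + g) = c *: theta f + theta g.
Proof. by rewrite thetaD thetaZ. Qed.
Lemma theta0 : theta 0 = 0.
Proof. by rewrite /theta DX0 DY0 oppr0. Qed.
Lemma theta1 : theta 1 = 0.
Proof. by rewrite /theta DX1 DY1 oppr0. Qed.
Lemma theta_c1 (c : k) f : theta (f + c *: 1) = theta f.
Proof. by rewrite thetaD thetaZ theta1 scaler0 addr0. Qed.

Definition mk_def (s : {fset Z2}) (F : Z2 -> k) : O := \sum_(m <- s) << F m *g m >>.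
Fact mk_key : unit. Proof. exact: tt. Qed.
Definition mk := locked_with mk_key mk_def.

Lemma mk_coef s F n : (forall m, m \notin s -> F m = 0) -> (mk s F)@_n = F n.
Proof. rewrite /mk unlock; exact: mcoeff_sumU0. Qed.

Lemma shift_coef (s : {fset Z2}) (F : Z2 -> k) p n :
  (\sum_(m <- s) << F m *g (m - p) >> : O)@_n = if n + p \in s then F (n + p) else 0.
Proof.
rewrite raddf_sum /=.
under eq_bigr do rewrite mcoeffU.
rewrite (eq_bigr (fun m => if m == n + p then F m else 0)); last first.
  move=> m _; have -> : (m - p == n) = (m == n + p).
    apply/eqP/eqP => [<-|->]; first by rewrite subrK.
    by rewrite addrK.
  by case: eqP.
by rewrite -big_mkcond /= sum_pred1_seq ?fset_uniq.
Qed.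

Lemma coef1 n : (1 : O)@_n = if n == 0 then 1 else 0.
Proof. by rewrite one_e e_coef eq_sym. Qed.

Lemma cr_subr p n : cr p (n - p) = cr p n.
Proof. rewrite /cr /=; move: p.1 p.2 n.1 n.2 => a b c d; ring. Qed.


Lemma sum_sq_bound (s : seq Z2) m : m \in s -> uniq s ->
  m.2 * m.2 <= \sum_(x <- s) x.2 * x.2.
Proof.
move=> ms us; rewrite (bigD1_seq m) //= lerDl.
by apply: sumr_ge0 => x _; rewrite -expr2 sqr_ge0.
Qed.

Lemma width_one f : exists p g, vbracket (theta (e p)) (theta g) = theta f.
Proof.
set S := msupp f.
set N : int := 1 + \sum_(x <- S) x.2 * x.2.
set p : Z2 := (1, N).
have crnz : forall m, m \in S -> m != 0 -> cr p m != 0.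
  move=> m mS mnz; rewrite /cr /p /=.
  have hb := sum_sq_bound mS (fset_uniq S).
  have [m10|m1nz] := eqVneq m.1 0.
    have m2nz : m.2 != 0.
      apply: contraNneq mnz => m20; case: m m10 m20 {mS hb} => a b /= -> ->; by [].
    by rewrite m10 mulr0 add0r mul1r oppr_eq0.
  rewrite mul1r; apply: crbound => //; by rewrite /N lerD2l.
pose F m := f@_m / (cr p m)%:~R.
pose g : O := \sum_(m <- S) << F m *g (m - p) >>.
exists p, g.
have hbr : br (e p) g = f + (- f@_0) *: 1.
  apply/malgP => n; rewrite br_e_coef shift_coef subrK cr_subr.
  rewrite mcoeffD mcoeffZ coef1.
  have [->|nnz] := eqVneq n 0.
    by rewrite /cr /= !mulr0 subrr mul0r mulr1 subrr.
  rewrite mulr0 addr0.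
  case: ifP => [nS|/negbT nS]; last by rewrite mulr0 mcoeff_outdom.
  rewrite /F mulrCA mulfV ?mulr1 //.
  by rewrite intrf_eq0; apply: crnz.
rewrite theta_bracket.
have -> : DY (e p) * DX g - DX (e p) * DY g = br (e p) g by [].
by rewrite hbr theta_c1.
Qed.


Lemma pair_neq0 (u : Z2) : u != 0 -> (u.1 != 0) || (u.2 != 0).
Proof.
case: u => a b /= h; rewrite -negb_and; apply: contra h => /andP [/eqP -> /eqP ->].
by [].
Qed.

Lemma double_neq0 (q : Z2) : q != 0 -> q + q != 0.
Proof.
move=> /pair_neq0 h; apply/negP => /eqP hqq.
have h1 : q.1 + q.1 = 0 by exact: (congr1 fst hqq).
have h2 : q.2 + q.2 = 0 by exact: (congr1 snd hqq).
move: h h1 h2; lia.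
Qed.

Lemma cands (u v : Z2) : u != 0 -> v != 0 ->
  exists q : Z2, (cr q u != 0) && (cr q v != 0).
Proof.
move=> /pair_neq0 hu /pair_neq0 hv.
case: (boolP ((cr (1,0) u != 0) && (cr (1,0) v != 0))) => [h|h1]; first by exists (1,0).
case: (boolP ((cr (0,1) u != 0) && (cr (0,1) v != 0))) => [h|h2]; first by exists (0,1).
exists (1,1); move: h1 h2 hu hv; rewrite /cr /=; lia.
Qed.

Lemma crD q u v : cr q (u + v) = cr q u + cr q v.
Proof. rewrite /cr /=; move: q.1 q.2 u.1 u.2 v.1 v.2 => a b c d x y; ring. Qed.
Lemma crB q u v : cr q (u - v) = cr q u - cr q v.
Proof. rewrite /cr /=; move: q.1 q.2 u.1 u.2 v.1 v.2 => a b c d x y; ring. Qed.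
Lemma crBl q u v : cr (q - u) v = cr q v - cr u v.
Proof. rewrite /cr /=; move: q.1 q.2 u.1 u.2 v.1 v.2 => a b c d x y; ring. Qed.
Lemma crN q u : cr (- q) u = - cr q u.
Proof. rewrite /cr /=; move: q.1 q.2 u.1 u.2 => a b c d; ring. Qed.
Lemma crNr q u : cr q (- u) = - cr q u.
Proof. rewrite /cr /=; move: q.1 q.2 u.1 u.2 => a b c d; ring. Qed.
Lemma crC q u : cr q u = - cr u q.
Proof. rewrite /cr /=; move: q.1 q.2 u.1 u.2 => a b c d; ring. Qed.
Lemma crxx q : cr q q = 0.
Proof. rewrite /cr /=; move: q.1 q.2 => a b; ring. Qed.
Lemma cr0 q : cr q 0 = 0.
Proof. by rewrite /cr /= !mulr0 subrr. Qed.

Definition S f : {fset Z2} := msupp f `\ 0.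
Lemma inS f m : (m \in S f) = (m != 0) && (f@_m != 0).
Proof. by rewrite /S in_fsetD1 mcoeff_neq0. Qed.

Lemma br_ee p m : br (e p) (e m) = (cr p m)%:~R *: e (m + p).
Proof.
apply/malgP => n; rewrite br_e_coef mcoeffZ !e_coef.
have -> : (m == n - p) = (m + p == n).
  apply/eqP/eqP => [->|<-]; first by rewrite subrK.
  by rewrite addrK.
case: eqP => [<-|_]; last by rewrite !mulr0.
by rewrite addrK.
Qed.

Lemma Ue (c : k) m : << c *g m >> = c *: e m.
Proof.
apply/malgP => n; rewrite [in X in X = _]mcoeffU [in X in _ = X]mcoeffZ e_coef.
by case: eqP => _; rewrite ?mulr1 ?mulr0.
Qed.

Lemma intsq (a b : int) : a - b != 0 -> a + b != 0 -> a * a != b * b.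
Proof. move=> h1 h2; nia. Qed.

Lemma card_lt_of (A B : {fset Z2}) a :
  (forall m, m \in A -> (m \in B) && (m != a)) -> a \in B -> (#|` A| < #|` B|)%N.
Proof.
move=> h aB; rewrite (cardfsD1 a B) aB add1n ltnS; apply: fsubset_leq_card.
apply/fsubsetP => m /h /andP [mB ma]; apply/fsetD1P; by split.
Qed.

Lemma card_le1 (A : {fset Z2}) x : (forall m, m \in A -> m = x) -> (#|` A| <= 1)%N.
Proof.
move=> h; rewrite -(cardfs1 x); apply: fsubset_leq_card.
by apply/fsubsetP => m /h ->; rewrite in_fset1.
Qed.

Lemma card_ge2 (A : {fset Z2}) x y : x \in A -> y \in A -> x != y -> (2 <= #|` A|)%N.
Proof.
move=> hx hy ne; have := cardfs2 x y; rewrite ne => <-.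
apply: fsubset_leq_card; apply/fsubsetP => m; rewrite in_fset2.
by case/orP => /eqP ->.
Qed.

Section Simple.
Variable I : Vect k -> Prop.
Hypothesis Isub : subspace I.
Hypothesis Iid : forall a x, Ham a -> I x -> I (vbracket a x).

Let J f := I (theta f).

Lemma J0 : J 0.
Proof. by rewrite /J theta0; case: Isub. Qed.
Lemma JZD (c : k) f g : J f -> J g -> J (c *: f + g).
Proof. by rewrite /J theta_lin => hf hg; case: Isub => _; apply. Qed.
Lemma JD f g : J f -> J g -> J (f + g).
Proof. by move=> hf hg; rewrite -[f]scale1r; apply: JZD. Qed.
Lemma JZ (c : k) f : J f -> J (c *: f).
Proof. by move=> hf; rewrite -[c *: f]addr0; apply: JZD => //; apply: J0. Qed.
Lemma Jbr h f : J f -> J (br h f).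
Proof.
move=> hf; rewrite /J /br -theta_bracket; apply: Iid => //.
by apply/HamE; exists h.
Qed.
Lemma J1 (c : k) : J (c *: 1).
Proof. by rewrite /J thetaZ theta1 scaler0; case: Isub. Qed.

Lemma lemmaA f m0 m1 : J f -> m0 \in S f -> m1 \in S f -> m0 != m1 -> m0 + m1 != 0 ->
  exists f', [/\ J f', (forall m, m \in S f' -> (m \in S f) && (m != m0)) & m1 \in S f'].
Proof.
move=> Jf hm0 hm1 ne01 s01.
have d01 : m0 - m1 != 0 by rewrite subr_eq0.
have [q /andP [q1 q2]] := cands d01 s01.
pose lam (n : Z2) : int := cr q (n - q) * cr (- q) n.
have lamE n : lam n = - (cr q n * cr q n) by rewrite /lam cr_subr crN mulrN.
have hT n : (br (e q) (br (e (- q)) f))@_n = (lam n)%:~R * f@_n.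
  rewrite br_e_coef br_e_coef opprK subrK /lam intrM mulrA //.
pose f' := (- (lam m0)%:~R) *: f + br (e q) (br (e (- q)) f).
have cf' n : f'@_n = ((lam n)%:~R - (lam m0)%:~R) * f@_n.
  by rewrite /f' mcoeffD mcoeffZ hT mulrBl addrC mulNr.
have lne : lam m1 != lam m0.
  rewrite !lamE eqr_opp eq_sym; apply: intsq.
    by rewrite -crB.
  by rewrite -crD.
exists f'; split.
- by apply: JZD => //; apply: Jbr; apply: Jbr.
- move=> m; rewrite !inS cf' => /andP [-> /= h].
  move: h; rewrite mulf_eq0 negb_or => /andP [h1 h2]; rewrite h2 /=.
  apply: contraNneq h1 => ->; by rewrite subrr.
- move: hm1; rewrite !inS cf' => /andP [-> h] /=.
  by rewrite mulf_neq0 // subr_eq0; apply: contra lne => /eqP /intrf_inj ->.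
Qed.


Lemma single f m0 : J f -> m0 \in S f -> (forall m, m \in S f -> m = m0) -> J (e m0).
Proof.
move=> Jf hm0 hall.
move: (hm0); rewrite inS => /andP [m0nz fm0].
have -> : e m0 = (f@_m0)^-1 *: (f + (- f@_0) *: 1).
  apply/malgP => n; rewrite e_coef mcoeffZ mcoeffD mcoeffZ coef1.
  have [<-|nm0] := eqVneq m0 n.
    by rewrite (negPf m0nz) mulr0 addr0 mulVf.
  have [->|nnz] := eqVneq n 0.
    by rewrite mulr1 subrr mulr0.
  rewrite mulr0 addr0.
  have : n \notin S f by apply: contra nm0 => /hall ->.
  by rewrite inS nnz /= negbK => /eqP ->; rewrite mulr0.
by apply: JZ; apply: JD => //; apply: J1.
Qed.

Lemma core n : forall f, (#|` S f| <= n)%N -> J f -> (exists m, m \in S f) ->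
  exists m, m != 0 /\ J (e m).
Proof.
elim: n => [|n IH] f hc Jf [m0 hm0].
  by move: hc; rewrite leqn0 cardfs_eq0 => /eqP Sf; rewrite Sf in hm0.
have m0nz : m0 != 0 by move: hm0; rewrite inS => /andP [].
have useA : forall f', J f' -> (#|` S f'| < #|` S f|)%N -> (exists m, m \in S f') ->
    exists m, m != 0 /\ J (e m).
  move=> f' Jf' hlt hne; apply: (IH f') => //.
  by rewrite -ltnS; apply: leq_trans hc.
case: (boolP (all (fun m => m == m0) (S f))) => [/allP hall|].
  exists m0; split => //; apply: (single Jf hm0).
  by move=> m /hall /eqP.
case/allPn => m1 hm1 /= ne10.
have ne01 : m0 != m1 by rewrite eq_sym.
have ge2 := card_ge2 hm0 hm1 ne01.
case: (boolP (m0 + m1 == 0)) => [s01|s01]; last first.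
  have [f' [Jf' hsub hm1']] := lemmaA Jf hm0 hm1 ne01 s01.
  by apply: (useA f') => //; [apply: (card_lt_of hsub hm0) | exists m1].
have em1 : m1 = - m0 by move: s01; rewrite addrC addr_eq0 => /eqP.
case: (boolP (all (fun m => (m == m0) || (m == m1)) (S f))) => [/allP hall|]; last first.
  case/allPn => m2 hm2 /=; rewrite negb_or => /andP [ne20 ne21].
  have s02 : m0 + m2 != 0.
    by rewrite addrC addr_eq0 -em1.
  have ne02 : m0 != m2 by rewrite eq_sym.
  have [f' [Jf' hsub hm2']] := lemmaA Jf hm0 hm2 ne02 s02.
  by apply: (useA f') => //; [apply: (card_lt_of hsub hm0) | exists m2].
have [q /andP [hq _]] := cands m0nz m0nz.
pose g := br (e q) f.
have Jg : J g by apply: Jbr.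
have cg x : g@_x = (cr q x)%:~R * f@_(x - q) by rewrite br_e_coef cr_subr.
have qnz : q != 0 by apply: contraNneq hq => ->; rewrite crC cr0 oppr0.
have hq1 : cr q m1 != 0 by rewrite em1 crNr oppr_eq0.
have inSg m : m \in S f -> cr q m != 0 -> m + q \in S g.
  move=> hm hcr; rewrite inS cg addrK; apply/andP; split; last first.
    rewrite crD crxx addr0; apply: mulf_neq0; first by rewrite intrf_eq0.
    by move: hm; rewrite inS => /andP [].
  apply: contraNneq hcr => /eqP; rewrite addr_eq0 => /eqP ->.
  by rewrite crNr crxx oppr0.
have g0 := inSg m0 hm0 hq.
have g1 := inSg m1 hm1 hq1.
have ne_g : m0 + q != m1 + q by rewrite (inj_eq (addIr q)).
have s_g : (m0 + q) + (m1 + q) != 0.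
  rewrite addrACA (eqP s01) add0r.
  exact: double_neq0.
have [g' [Jg' hsub hm1']] := lemmaA Jg g0 g1 ne_g s_g.
apply: (useA g') => //; last by exists (m1 + q).
have le1 : (#|` S g'| <= 1)%N.
  apply: (@card_le1 _ (m1 + q)) => m /hsub /andP [hm hne].
  move: hm; rewrite inS cg => /andP [mnz].
  rewrite mulf_eq0 negb_or => /andP [hcr hf].
  have : m - q \in S f.
    rewrite inS hf andbT; apply: contraNneq hcr => /eqP.
    by rewrite subr_eq0 => /eqP ->; rewrite crxx.
  move=> /hall /orP [] /eqP hmq.
    by move: hne; rewrite -hmq subrK eqxx.
  by rewrite -hmq subrK.
by apply: leq_ltn_trans le1 ge2.
Qed.


Lemma step m n : J (e m) -> cr (n - m) m != 0 -> J (e n).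
Proof.
move=> Jm hc.
have -> : e n = ((cr (n - m) m)%:~R)^-1 *: br (e (n - m)) (e m).
  rewrite br_ee scalerA mulVf ?intrf_eq0 // scale1r.
  by rewrite addrC subrK.
by apply: JZ; apply: Jbr.
Qed.

Lemma all_e m : m != 0 -> J (e m) -> forall n, J (e n).
Proof.
move=> mnz Jm n.
have [->|nnz] := eqVneq n 0.
  by rewrite -one_e -[1]scale1r; apply: J1.
have [q /andP [hqm hqn]] := cands mnz nnz.
have Jq : J (e q) by apply: (step Jm); rewrite crBl crxx subr0.
apply: (step Jq); rewrite crBl crxx subr0 crC oppr_eq0 //.
Qed.

Lemma all_J : (exists m, m != 0 /\ J (e m)) -> forall g, J g.
Proof.
move=> [m [mnz Jm]] g; rewrite (monalgE g).
apply: (big_ind J); [exact: J0 | exact: JD |].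
by move=> x _; rewrite Ue; apply: JZ; apply: (all_e mnz Jm).
Qed.

Lemma theta_eq0 f : S f = fset0 -> theta f = 0.
Proof.
move=> hS.
have hc n : n != 0 -> f@_n = 0.
  move=> nnz; apply/eqP; move: (in_fset0 n); rewrite -hS inS nnz /=.
  by move/negbT; rewrite negbK.
have c0 n : (n.1)%:~R * f@_n = 0 /\ (n.2)%:~R * f@_n = 0.
  have [->|nnz] := eqVneq n 0; first by rewrite !mul0r.
  by rewrite hc // !mulr0.
rewrite /theta; congr pair.
  by apply/malgP => n; rewrite DY_coef mcoeff0; case: (c0 n).
by apply/malgP => n; rewrite mcoeffN DX_coef mcoeff0; case: (c0 n) => -> _; rewrite oppr0.
Qed.

Hypothesis Isub2 : forall x, I x -> Ham x.

Lemma simple_main x0 : I x0 -> x0 <> 0 -> forall x, Ham x -> I x.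
Proof.
move=> Ix0 x0nz x /HamE [g ->].
have [f0 ef0] := (HamE x0).1 (Isub2 Ix0).
have Jf0 : J f0 by rewrite /J -ef0.
have [/eqP h|/fset0Pn ne] := boolP (S f0 == fset0).
  by exfalso; apply: x0nz; rewrite ef0 theta_eq0.
have := core (leqnn _) Jf0 ne.
by move=> hm; apply: (all_J hm).
Qed.
End Simple.


Implicit Types x y : Vect k.

Lemma Ham_theta f : Ham (theta f).
Proof. by apply/HamE; exists f. Qed.

Lemma Ham_subspace : subspace (@Ham k).
Proof.
split; first by rewrite -theta0; apply: Ham_theta.
move=> a x y /HamE [f ->] /HamE [g ->]; rewrite -theta_lin; exact: Ham_theta.
Qed.

Lemma Ham_br x y : Ham x -> Ham y -> Ham (vbracket x y).
Proof. by move=> /HamE [f ->] /HamE [g ->]; rewrite theta_bracket; apply: Ham_theta. Qed.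

Lemma Ham_lie : lie_subalgebra (@vbracket k) (@Ham k).
Proof. split; [exact: Ham_subspace | exact: Ham_br]. Qed.

Lemma Ham_VP x : Ham x -> VP x.
Proof. by move=> /HamE [f ->]; apply: theta_VP. Qed.

Lemma Ham_ideal : lie_ideal (@vbracket k) (@Ham k) (@VP k).
Proof.
split; first exact: Ham_subspace.
split; first exact: Ham_VP.
by move=> a x ha /HamE [f ->]; rewrite VP_bracket //; apply: Ham_theta.
Qed.

Lemma one_neq0 : (1 : O) != 0.
Proof. by apply/eqP => /(congr1 (mcoeff 0)); rewrite coef1 eqxx mcoeff0; apply/eqP; rewrite oner_eq0. Qed.

Lemma not_Ham10 : ~ Ham ((1, 0) : Vect k).
Proof.
move=> /HamE [f [h1 _]].
have := congr1 (mcoeff 0) h1; rewrite coef1 eqxx DY_coef /= mul0r.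
by move/eqP; rewrite oner_eq0.
Qed.

Lemma VP10 : VP ((1, 0) : Vect k).
Proof. by apply/VPE; rewrite /= DX1 DY0 addr0. Qed.

Lemma Ham_proper : proper_in (@Ham k) (@VP k).
Proof.
split; first exact: Ham_VP.
by exists (1, 0); split; [exact: VP10 | exact: not_Ham10].
Qed.


Definition wv (i : 'I_2) : Vect k := if val i == 0%N then (1, 0) else (0, 1).

Lemma sum_wv (c : 'I_2 -> k) :
  \sum_(i < 2) c i *: wv i = (c ord0 *: 1, c (lift ord0 ord0) *: 1).
Proof.
rewrite big_ord_recl big_ord1 /wv /=.
by rewrite -[LHS]/(c ord0 *: 1 + c (lift ord0 ord0) *: 0, c ord0 *: 0 + c (lift ord0 ord0) *: 1) !scaler0 addr0 add0r.
Qed.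

Lemma codim_Ham : codim_in 2 (@Ham k) (@VP k).
Proof.
exists wv; split.
  by move=> i; rewrite /wv; case: ifP => _; [exact: VP10 | apply/VPE; rewrite /= DX0 DY1 addr0].
split.
  move=> x /VPE hx.
  pose a := x.1; pose b := x.2.
  have hc n : (n.1)%:~R * a@_n + (n.2)%:~R * b@_n = 0.
    by rewrite -DX_coef -DY_coef -mcoeffD hx mcoeff0.
  exists (fun i : 'I_2 => if val i == 0%N then a@_0 else b@_0).
  rewrite sum_wv /=.
  pose F (m : Z2) : k := if (m.2 != 0) then a@_m / (m.2)%:~R else - (b@_m / (m.1)%:~R).
  apply/HamE; exists (mk (msupp a `|` msupp b) F).
  have cF n : (mk (msupp a `|` msupp b) F)@_n = F n.
    apply: mk_coef => m; rewrite in_fsetU negb_or => /andP [ha hb].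
    by rewrite /F !mcoeff_outdom // !mul0r oppr0; case: ifP.
  rewrite /theta; congr pair.
    apply/malgP => n; rewrite DY_coef cF mcoeffB mcoeffZ coef1.
    have [->|nnz] := eqVneq n 0; first by rewrite mul0r mulr1 subrr.
    rewrite mulr0 subr0 /F.
    have [n20|n2nz] := eqVneq n.2 0.
      rewrite n20 mul0r /=.
      have n1nz : n.1 != 0.
        by move: (pair_neq0 nnz); rewrite n20 eqxx orbF.
      move: (hc n); rewrite n20 mul0r addr0 => /eqP; rewrite mulf_eq0 intrf_eq0 (negPf n1nz) /=.
      by move/eqP.
    by rewrite mulrCA mulfV ?mulr1 // intrf_eq0.
  apply/malgP => n; rewrite mcoeffN DX_coef cF mcoeffB mcoeffZ coef1.
  have [->|nnz] := eqVneq n 0; first by rewrite mul0r mulr1 subrr oppr0.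
  rewrite mulr0 subr0 /F.
  have [n20|n2nz] := eqVneq n.2 0.
    have n1nz : n.1 != 0.
      by move: (pair_neq0 nnz); rewrite n20 eqxx orbF.
    rewrite mulrN opprK mulrCA mulfV ?mulr1 // intrf_eq0 //.
  have e1 : (n.1)%:~R * a@_n = - ((n.2)%:~R * b@_n).
    by apply/eqP; rewrite -addr_eq0 hc.
  by rewrite mulrA e1 mulNr mulrAC mulfV ?intrf_eq0 // mul1r opprK.
move=> c; rewrite sum_wv => /HamE [f [h1 h2]] i.
have c0 : c ord0 = 0.
  have := congr1 (mcoeff 0) h1.
  by rewrite [in X in X = _]mcoeffZ coef1 eqxx mulr1 DY_coef mul0r.
have c1 : c (lift ord0 ord0) = 0.
  have := congr1 (mcoeff 0) h2.
  by rewrite [in X in X = _]mcoeffZ coef1 eqxx mulr1 mcoeffN DX_coef mul0r oppr0.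
case: i => [[|[|//]] hi].
  by rewrite (_ : Ordinal hi = ord0) //; apply: val_inj.
by rewrite (_ : Ordinal hi = lift ord0 ord0) //; apply: val_inj.
Qed.


Lemma omega1 : omega k = 1.
Proof. by rewrite /omega /wedge /= mulr1 mulr0 subr0. Qed.

Lemma div_surj h : h@_0 = 0 -> exists g1 g2, DX g1 + DY g2 = h.
Proof.
move=> h0.
pose F1 (m : Z2) : k := if m.1 != 0 then h@_m / (m.1)%:~R else 0.
pose F2 (m : Z2) : k := if m.1 != 0 then 0 else h@_m / (m.2)%:~R.
have z1 m : m \notin msupp h -> F1 m = 0.
  by move=> hm; rewrite /F1 mcoeff_outdom // mul0r; case: ifP.
have z2 m : m \notin msupp h -> F2 m = 0.
  by move=> hm; rewrite /F2 mcoeff_outdom // mul0r; case: ifP.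
exists (mk (msupp h) F1), (mk (msupp h) F2).
apply/malgP => n; rewrite mcoeffD DX_coef DY_coef (mk_coef _ z1) (mk_coef _ z2) /F1 /F2.
have [n10|n1nz] := eqVneq n.1 0; last first.
  by rewrite /= mulr0 addr0 mulrCA mulfV ?mulr1 // intrf_eq0.
rewrite n10 /= mul0r add0r.
have [n20|n2nz] := eqVneq n.2 0; last first.
  by rewrite mulrCA mulfV ?mulr1 // intrf_eq0.
have -> : n = 0 by case: n n10 n20 => a b /= -> ->.
by rewrite h0 !(mul0r, mulr0).
Qed.

Lemma d0_c1 f (c : k) : d0 (f + c *: 1) = d0 f.
Proof. by rewrite /d0 !dXE !dYE DXD DYD DXZ DYZ DX1 DY1 !scaler0 !addr0. Qed.

Lemma calE_Ham x : calE x <-> Ham x.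
Proof.
split; first by move=> [f [_ hf]]; exists f.
move=> [f hf]; exists (f + (- f@_0) *: 1); split; last by rewrite d0_c1.
have h0 : (f + (- f@_0) *: 1)@_0 = 0.
  by rewrite mcoeffD mcoeffZ coef1 eqxx mulr1 subrr.
have [g1 [g2 hg]] := div_surj h0.
exists (g1, g2); rewrite /is_div contrE /d1 /= omega1 mulr1 dXE dYE DYN opprK.
exact: hg.
Qed.

Lemma comm_Ham x : lie_commutator (@vbracket k) (@Ham k) (@Ham k) x <-> Ham x.
Proof.
split.
  move=> [n [c [w [hw ->]]]].
  apply: (big_ind (@Ham k)).
  - by case: Ham_subspace.
  - move=> u v hu hv; rewrite -[u]scale1r; by case: Ham_subspace => _; apply.
  - move=> i _; have [a [b [ha [hb ->]]]] := hw i.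
    rewrite -[_ *: _]addr0; case: Ham_subspace => h0 hs; apply: hs; [exact: Ham_br | exact: h0].
move=> /HamE [f ->].
have [p [g hpg]] := width_one f.
exists 1%N, (fun _ => 1), (fun _ => vbracket (theta (e p)) (theta g)); split.
  move=> _; exists (theta (e p)), (theta g); split; first exact: Ham_theta.
  by split; first exact: Ham_theta.
by rewrite big_ord1 scale1r.
Qed.

Lemma nonab : vbracket (theta (e (1, 0))) (theta (e (0, 1))) != 0.
Proof.
rewrite theta_bracket.
have -> : DY (e (1, 0)) * DX (e (0, 1)) - DX (e (1, 0)) * DY (e (0, 1)) =
          br (e (1,0)) (e (0,1)) by [].
rewrite br_ee thetaZ.
apply/eqP => /(congr1 (fun v => (v.1)@_((1, 1) : Z2))).
rewrite /= mcoeffZ DY_coef e_coef mcoeff0.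
have -> : ((0, 1) + (1, 0) : Z2) == (1, 1) by [].
have -> : cr (1, 0) (0, 1) = -1 by [].
by rewrite mulr1 /= mulr1 => /eqP; rewrite intrf_eq0.
Qed.

Lemma width_Ham : bracket_width_eq (@vbracket k) (@Ham k) 1.
Proof.
split.
  move=> a /comm_Ham /HamE [f ->].
  have [p [g hpg]] := width_one f.
  exists 1%N; split => //.
  exists (fun _ => theta (e p)), (fun _ => theta g); split.
    by move=> _; split; apply: Ham_theta.
  by rewrite big_ord1.
move=> m; rewrite ltnS leqn0 => /eqP -> hw.
have hc : lie_commutator (@vbracket k) (@Ham k) (@Ham k)
            (vbracket (theta (e (1, 0))) (theta (e (0, 1)))).
  by apply/comm_Ham; apply: Ham_br; apply: Ham_theta.
have [m' [hm' [b [c [_ hb]]]]] := hw _ hc.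
move: hm' b c hb; rewrite leqn0 => /eqP -> b c; rewrite big_ord0 => h.
by move: nonab; rewrite h eqxx.
Qed.

Lemma simple_Ham : simple_lie (@vbracket k) (@Ham k).
Proof.
split; first exact: Ham_lie.
split.
  exists (theta (e (1, 0))), (theta (e (0, 1))); split; first exact: Ham_theta.
  split; first exact: Ham_theta.
  by apply/eqP; apply: nonab.
move=> I [Isub [Isub2 Iid]].
case: (Classical_Prop.classic (forall x, I x -> x = 0)) => [h|h]; first by left.
right; have [x0 hx0] := Classical_Pred_Type.not_all_ex_not _ _ h.
have [Ix0 x0nz] : I x0 /\ x0 <> 0.
  split; first by apply: Classical_Prop.NNPP => nI; apply: hx0 => Ix; case: (nI Ix).
  by move=> e0; apply: hx0 => _.
exact: (simple_main Isub Iid Isub2 Ix0 x0nz).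
Qed.


Definition lexle (m n : Z2) : bool := (m.1 < n.1) || ((m.1 == n.1) && (m.2 <= n.2)).

Lemma lexle_refl m : lexle m m.
Proof. by rewrite /lexle eqxx lexx orbT. Qed.

Lemma lexle_trans a b c : lexle a b -> lexle b c -> lexle a c.
Proof. rewrite /lexle; lia. Qed.

Lemma lexle_total a b : lexle a b || lexle b a.
Proof. rewrite /lexle; lia. Qed.

Lemma lexle_add a b c d : lexle a b -> lexle c d -> lexle (a + c) (b + d).
Proof. rewrite /lexle /=; lia. Qed.

Lemma lexle_add_eq a b c d : lexle a b -> lexle c d -> a + c = b + d -> a = b.
Proof.
move=> h1 h2 E.
have e1 : a.1 + c.1 = b.1 + d.1 by exact: (congr1 fst E).
have e2 : a.2 + c.2 = b.2 + d.2 by exact: (congr1 snd E).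
move: h1 h2 e1 e2 {E}; case: a => a1 a2; case: b => b1 b2; rewrite /lexle /= => h1 h2 e1 e2.
have [-> ->] : a1 = b1 /\ a2 = b2 by lia.
by [].
Qed.

Lemma lex_max (s : seq Z2) : s != [::] -> exists2 t, t \in s & forall m, m \in s -> lexle m t.
Proof.
elim: s => [//|a s IH] _.
case: (eqVneq s [::]) => [->|sne].
  by exists a; rewrite ?mem_seq1 // => m; rewrite mem_seq1 => /eqP ->; apply: lexle_refl.
have [t ts ht] := IH sne.
case: (boolP (lexle a t)) => hat.
  exists t; first by rewrite in_cons ts orbT.
  by move=> m; rewrite in_cons => /orP [/eqP ->|/ht].
exists a; first by rewrite in_cons eqxx.
have hta : lexle t a by move: (lexle_total a t); rewrite (negPf hat).
move=> m; rewrite in_cons => /orP [/eqP ->|/ht hm]; first exact: lexle_refl.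
exact: lexle_trans hm hta.
Qed.

Definition bounded f (M : Z2) := forall m, f@_m != 0 -> lexle m M.

Lemma sum_neq0 (s : seq Z2) (F : Z2 -> k) :
  \sum_(z <- s) F z != 0 -> exists2 z, z \in s & F z != 0.
Proof.
move=> h; case: (boolP (has (fun z => F z != 0) s)) => [/hasP [z xs hx]|/hasPn hn].
  by exists z.
by move: h; rewrite big_seq big1 ?eqxx // => z /hn; rewrite negbK => /eqP.
Qed.

Lemma bnd_mul f g M N : bounded f M -> bounded g N ->
  bounded (f * g) (M + N) /\ (f * g)@_(M + N) = f@_M * g@_N.
Proof.
move=> hf hg; split.
  move=> m; rewrite mul_coef => /sum_neq0 [z _].
  rewrite mulf_eq0 negb_or => /andP [fx gx].
  have := lexle_add (hf _ fx) (hg _ gx).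
  by rewrite addrC subrK.
rewrite mul_coef.
rewrite (eq_bigr (fun z => if z == M then f@_M * g@_N else 0)); last first.
  move=> z _; case: eqP => [->|/eqP ne]; first by rewrite [M + N]addrC addrK.
  case: (boolP (f@_z * g@_(M + N - z) == 0)) => [/eqP //|].
  rewrite mulf_eq0 negb_or => /andP [fx gx].
  have E : z + (M + N - z) = M + N by rewrite addrC subrK.
  by move: ne; rewrite (lexle_add_eq (hf _ fx) (hg _ gx) E) eqxx.
rewrite -big_mkcond /= sum_pred1_seq ?fset_uniq //.
by case: ifP => // /negbT /mcoeff_outdom ->; rewrite mul0r.
Qed.

Lemma bnd_Dw w f M : bounded f M -> bounded (Dw w f) M.
Proof.
move=> hf m; rewrite Dw_coef mulf_eq0 negb_or => /andP [_]; exact: hf.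
Qed.

Lemma bnd_add f g M : bounded f M -> bounded g M -> bounded (f + g) M.
Proof.
move=> hf hg m; rewrite mcoeffD => h.
case: (boolP (f@_m == 0)) => [/eqP f0|]; last exact: hf.
by apply: hg; move: h; rewrite f0 add0r.
Qed.

Lemma bnd_e n : bounded (e n) n.
Proof.
move=> m; rewrite e_coef; case: (eqVneq n m) => [->|_] h; first exact: lexle_refl.
by move: h; rewrite eqxx.
Qed.

Section LND.
Variable xi : Vect k.
Variable t : Z2.
Hypothesis h1 : bounded xi.1 t.
Hypothesis h2 : bounded xi.2 t.

Let phi (N : Z2) : k := xi.1@_t * (N.1)%:~R + xi.2@_t * (N.2)%:~R.

Lemma bnd_vact g N : bounded g N ->
  bounded (vact xi g) (t + N) /\ (vact xi g)@_(t + N) = phi N * g@_N.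
Proof.
move=> hg; rewrite vactE.
have [b1 c1] := bnd_mul h1 (@bnd_Dw (fun m => m.1) _ _ hg).
have [b2 c2] := bnd_mul h2 (@bnd_Dw (fun m => m.2) _ _ hg).
split; first exact: bnd_add.
rewrite mcoeffD [in X in X + _]c1 [in X in _ + X]c2 DX_coef DY_coef /phi.
move: (xi.1@_t) (xi.2@_t) ((N.1)%:~R : k) ((N.2)%:~R : k) (g@_N) => A B C D G; ring.
Qed.

Lemma phiD a b : phi (a + b) = phi a + phi b.
Proof.
rewrite /phi /= !intrD.
move: (xi.1@_t) (xi.2@_t) ((a.1)%:~R : k) ((a.2)%:~R : k) ((b.1)%:~R : k) ((b.2)%:~R : k).
move=> *; ring.
Qed.

Lemma iter_nonzero n0 : (forall s, phi (iter s (fun N => t + N) n0) != 0) ->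
  forall s, bounded (iter s (vact xi) (e n0)) (iter s (fun N => t + N) n0) /\
            (iter s (vact xi) (e n0))@_(iter s (fun N => t + N) n0) != 0.
Proof.
move=> hphi; elim=> [|s [hb hc]] /=.
  by split; [exact: bnd_e | rewrite e_coef eqxx oner_eq0].
have [b c] := bnd_vact hb.
by split => //; rewrite c mulf_neq0.
Qed.

End LND.

Lemma lnd_zero xi : locally_nilpotent xi -> xi = 0.
Proof.
move=> hl; apply/eqP; apply/negP => /negP xnz.
have sne : msupp xi.1 ++ msupp xi.2 != [::].
  move: xnz; case: xi {hl} => a b /=; apply: contraNneq.
  move=> /eqP; rewrite -size_eq0 size_cat addn_eq0 !size_eq0 => /andP [ha hb].
  have ea : a = 0.
    apply/malgP => n; rewrite mcoeff0 mcoeff_outdom //; apply/negP => hn.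
    by have : n \in (msupp a : seq _) := hn; rewrite (eqP ha).
  have eb : b = 0.
    apply/malgP => n; rewrite mcoeff0 mcoeff_outdom //; apply/negP => hn.
    by have : n \in (msupp b : seq _) := hn; rewrite (eqP hb).
  by rewrite ea eb.
have [t ts ht] := lex_max sne.
have h1 : bounded xi.1 t.
  by move=> m hm; apply: ht; rewrite mem_cat -mcoeff_neq0 hm.
have h2 : bounded xi.2 t.
  by move=> m hm; apply: ht; rewrite mem_cat orbC -mcoeff_neq0 hm.
pose phi (N : Z2) : k := xi.1@_t * (N.1)%:~R + xi.2@_t * (N.2)%:~R.
have phiD a b : phi (a + b) = phi a + phi b.
  rewrite /phi /= !intrD.
  move: (xi.1@_t) (xi.2@_t) ((a.1)%:~R : k) ((a.2)%:~R : k) ((b.1)%:~R : k) ((b.2)%:~R : k).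
  move=> *; ring.
have phiI n0 s : phi (iter s (fun N => t + N) n0) = phi n0 + s%:R * phi t.
  elim: s => [|s IH] /=; first by rewrite mul0r addr0.
  by rewrite phiD IH mulrSr; move: (phi n0) (phi t) => A B; ring.
have tnz : (xi.1@_t != 0) || (xi.2@_t != 0).
  by move: ts; rewrite mem_cat -!mcoeff_neq0.
have [n0 hn0] : exists n0, forall s, phi (iter s (fun N => t + N) n0) != 0.
  case: (eqVneq (phi t) 0) => [pt0|ptnz].
    case/orP: tnz => [ha|hb].
      exists (1, 0) => s; rewrite phiI pt0 mulr0 addr0 /phi /=.
      by rewrite mulr1 mulr0 addr0.
    exists (0, 1) => s; rewrite phiI pt0 mulr0 addr0 /phi /=.
    by rewrite mulr1 mulr0 add0r.
  exists t => s; rewrite phiI -{1}[phi t]mul1r -mulrDl mulf_neq0 //.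
  by rewrite addrC natr1 ((pcharf0P _).1 char0).
have [s hs] := hl (e n0).
have [_ hc] := iter_nonzero h1 h2 hn0 s.
by move: hc; rewrite hs mcoeff0 eqxx.
Qed.

End Basics.

Lemma zero_lie (k : fieldType) : lie_subalgebra (@vbracket k) (fun v => v = 0).
Proof.
split; first split => //.
  by move=> a x y -> ->; rewrite scaler0 addr0.
by move=> x y -> ->; rewrite vbracketE !vactE /= !mul0r !addr0 subrr.
Qed.

Local Close Scope fset.

Theorem proposition4p6 (k : closedFieldType) (char0 : [pchar k] =i pred0) :
  (* (1) *)
  ((forall v : Vect k,
      lie_generated (@vbracket k) (@locally_nilpotent k) v -> v = 0) /\
   (forall v : Vect k,
      lie_generated (@vbracket k)
        (fun xi => locally_nilpotent xi /\ Ham xi) v -> v = 0)) /\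
  (* (2) *)
  (lie_ideal (@vbracket k) (@Ham k) (@VP k) /\
   proper_in (@Ham k) (@VP k) /\
   codim_in 2 (@Ham k) (@VP k)) /\
  (* (3) *)
  ((forall xi : Vect k,
      calE xi <-> lie_commutator (@vbracket k) (@Ham k) (@Ham k) xi) /\
   (forall xi : Vect k,
      lie_commutator (@vbracket k) (@Ham k) (@Ham k) xi <-> Ham xi) /\
   simple_lie (@vbracket k) (@Ham k) /\
   bracket_width_eq (@vbracket k) (@Ham k) 1).
Proof.
split.
  split.
    move=> v hv; apply: (hv (fun v => v = 0)); first exact: zero_lie.
    by move=> s hs; apply: (lnd_zero char0).
  move=> v hv; apply: (hv (fun v => v = 0)); first exact: zero_lie.
  by move=> s [hs _]; apply: (lnd_zero char0).
split.
  split; first exact: Ham_ideal.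
  split; first exact: Ham_proper.
  exact: (codim_Ham char0).
split.
  move=> xi; split.
    by move=> /(calE_Ham char0) /(comm_Ham char0).
  by move=> /(comm_Ham char0) /(calE_Ham char0).
split; first exact: (comm_Ham char0).
split; first exact: (simple_Ham char0).
exact: (width_Ham char0).
Qed.
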